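(* Assume $T_1\ge1$, $\eta_1\le\frac{1}{4k(T_1+1)}$, $0<r\le\frac{\eta_1}{200}$, and suppose that $\frac{k}{4d}\le|\mathcal{W}_0^+\cap\mathcal{A}^+|,\,|\mathcal{W}_0^-\cap\mathcal{A}^-|\le\frac{k}{d}$ and $|S_1^+|,|S_1^-|\ge\frac{m_1}{3}$. Define $z(x)\in\mathbb{R}^k$ by $z(x)_i=\max_j\sigma(w_i^{(T_1)}\cdot x[j])$, and define $v^*\in\mathbb{R}^k$ by $v^*_i=\frac{80d}{k\eta_1T_1}$ for $i\in\mathcal{W}_0^+\cap\mathcal{A}^+$, $v^*_i=-\frac{80d}{k\eta_1T_1}$ for $i\in\mathcal{W}_0^-\cap\mathcal{A}^-$, and $v^*_i=0$ otherwise. Then $y\,(v^*\cdot z(x))>1$ for every $(x,y)$ in the support of $\mathcal{D}$, and $\|v^*\|^2\le\frac{2\cdot 80^2\,d}{k\,\eta_1^2T_1^2}$.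
   Context: Fix $n\ge1$, $d\ge3$ and orthonormal $o_1,\dots,o_d\in\mathbb{R}^d$. Inputs are $x=(x[1],\dots,x[n])\in\mathbb{R}^{nd}$. The distribution $\mathcal{D}$ on $\mathbb{R}^{nd}\times\{\pm1\}$: $y$ uniform on $\{\pm1\}$; given $y=1$, an index $j_+$ uniform on $\{1,\dots,n\}$ is drawn, $x[j_+]=o_1$, and for $j\ne j_+$ independently $x[j]=o_{i_j}$ with $i_j$ uniform on $\{3,\dots,d\}$; given $y=-1$, the same with $o_2$ instead of $o_1$. Network $N_{(W,a)}(x)=\sum_{i=1}^k a_i\max_j\sigma(w_i\cdot x[j])$, $\sigma(z)=\max\{0,z\}$. Loss $\ell(z)=\log(1+e^{-z})$. $S_1$ is a finite set of $m_1$ samples from $\mathcal{D}$, $S_1^\pm=\{x:(x,\pm1)\in S_1\}$, $\mathcal{L}_1(W,a)=\frac1{m_1}\sum_{(x,y)\in S_1}\ell(yN_{(W,a)}(x))$. Initialization: $\|w_i^{(0)}\|=r$, $a_i^{(0)}\in\{\pm1\}$. Iterates $W^{(t)}=W^{(t-1)}-\eta_1\nabla_W\mathcal{L}_1(W^{(t-1)},a^{(0)})$, $t=1,\dots,T_1$, with gradient convention $\frac{\partial}{\partial w_i}\max_j\sigma(w_i\cdot x[j])=p_i(x)$, where $p_i(x)=x[j^*]$ for $j^*\in\arg\max_j w_i\cdot x[j]$ if $w_i\cdot x[j^*]>0$ and $0$ otherwise; $w_i^{(t)}$ is the $i$th row of $W^{(t)}$. Sets: $\mathcal{A}^\pm=\{i:a_i^{(0)}=\pm1\}$,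 $\mathcal{W}_0^+=\{i:\arg\max_{l\in\{1,3,\dots,d\}}w_i^{(0)}\cdot o_l=1,\ w_i^{(0)}\cdot o_1>0\}$, $\mathcal{W}_0^-=\{i:\arg\max_{l\in\{2,3,\dots,d\}}w_i^{(0)}\cdot o_l=2,\ w_i^{(0)}\cdot o_2>0\}$. *)

(* Defs.v *)
From Stdlib Require Import Reals List.
Open Scope R_scope.

(* Vectors of R^d are represented as nat -> R; only coordinates c < d matter. *)
Definition vec := nat -> R.

Fixpoint rsum (n : nat) (f : nat -> R) : R :=
  match n with O => 0 | S m => rsum m f + f m end.

Definition dot (d : nat) (u v : vec) : R := rsum d (fun c => u c * v c).

Definition relu (z : R) : R := Rmax 0 z.

(* an input x = (x[0], ..., x[n-1]) of n patches *)
Definition input := nat -> vec.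

(* neuron d n w x = max_{j<n} relu (w . x[j])  (for n >= 1; relu values are >= 0) *)
Fixpoint neuron (d n : nat) (w : vec) (x : input) : R :=
  match n with
  | O => 0
  | S j => Rmax (neuron d j w x) (relu (dot d w (x j)))
  end.

Definition net (d n k : nat) (W : nat -> vec) (a : nat -> R) (x : input) : R :=
  rsum k (fun i => a i * neuron d n (W i) x).

Definition loss (z : R) : R := ln (1 + exp (- z)).
Definition dloss (z : R) : R := - / (1 + exp z).

(* p_i(x) with the argmax index j chosen: x[j] if w . x[j] > 0, else 0 *)
Definition pvec (d : nat) (w : vec) (x : input) (j : nat) : vec :=
  fun c => if Rlt_dec 0 (dot d w (x j)) then x j c else 0.

(* gradient of L_1 w.r.t. w_i, given the chosen subgradient p i x of max_j relu *)
Definition grad (d n k : nat) (S1 : list (input * R)) (W : nat -> vec)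
  (a : nat -> R) (p : nat -> input -> vec) (i : nat) : vec :=
  fun c => / INR (length S1) *
    fold_right (fun s acc =>
      dloss (snd s * net d n k W a (fst s)) * snd s * a i * p i (fst s) c + acc)
      0 S1.

(* x matches the support pattern with the "signal" vector o lab at a position jp,
   and o_{i_j} with i_j in {2,...,d-1} (0-based: o_3..o_d) elsewhere *)
Definition supp_pattern (d n : nat) (o : nat -> vec) (lab : nat) (x : input) : Prop :=
  exists jp, (jp < n)%nat /\ exists ii : nat -> nat,
    forall j, (j < n)%nat ->
      (j = jp -> x j = o lab) /\
      (j <> jp -> (2 <= ii j < d)%nat /\ x j = o (ii j)).

(* (x,y) in the support of D (o 0 = o_1, o 1 = o_2) *)
Definition in_supp (d n : nat) (o : nat -> vec) (xy : input * R) : Prop :=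
  (snd xy = 1 /\ supp_pattern d n o 0 (fst xy)) \/
  (snd xy = -1 /\ supp_pattern d n o 1 (fst xy)).

Definition count_lab (y : R) (S1 : list (input * R)) : nat :=
  length (filter (fun s => if Req_EM_T (snd s) y then true else false) S1).

Definition card_is (P : nat -> Prop) (c : nat) : Prop :=
  exists L : list nat, NoDup L /\ (forall i, In i L <-> P i) /\ length L = c.

(* W_0^+ : argmax_{l in {1,3,..,d}} w.o_l = 1 (unique maximiser) and w.o_1 > 0 *)
Definition W0plus (d : nat) (o : nat -> vec) (w : vec) : Prop :=
  (forall l, (2 <= l < d)%nat -> dot d w (o l) < dot d w (o 0%nat)) /\
  0 < dot d w (o 0%nat).

Definition W0minus (d : nat) (o : nat -> vec) (w : vec) : Prop :=
  (forall l, (2 <= l < d)%nat -> dot d w (o l) < dot d w (o 1%nat)) /\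
  0 < dot d w (o 1%nat).

(* Main.v *)
Require Import Defs.
From Stdlib Require Import Reals List Lra Lia FunctionalExtensionality.
Open Scope R_scope.

Definition lsum {A : Type} (L : list A) (f : A -> R) : R :=
  fold_right (fun s acc => f s + acc) 0 L.

Lemma rsum_ext n f g : (forall c, (c < n)%nat -> f c = g c) -> rsum n f = rsum n g.
Proof. induction n; simpl; intros H; [reflexivity|]. rewrite IHn by (intros; apply H; lia). rewrite H by lia. reflexivity. Qed.

Lemma rsum_le n f g : (forall c, (c < n)%nat -> f c <= g c) -> rsum n f <= rsum n g.
Proof. induction n; simpl; intros H; [lra|]. assert (f n <= g n) by (apply H; lia). assert (rsum n f <= rsum n g) by (apply IHn; intros; apply H; lia). lra. Qed.

Lemma rsum_plus n f g : rsum n (fun c => f c + g c) = rsum n f + rsum n g.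
Proof. induction n; simpl; [lra|]. rewrite IHn. lra. Qed.

Lemma rsum_scal n al f : rsum n (fun c => al * f c) = al * rsum n f.
Proof. induction n; simpl; [lra|]. rewrite IHn. lra. Qed.

Lemma rsum_const n b : rsum n (fun _ => b) = INR n * b.
Proof. induction n; simpl rsum; [simpl; lra|]. rewrite IHn, S_INR. lra. Qed.

Lemma rsum_abs n f B : (forall i, (i < n)%nat -> Rabs (f i) <= B) -> Rabs (rsum n f) <= INR n * B.
Proof. induction n; simpl rsum; intros H.
 - simpl. rewrite Rabs_R0. lra.
 - rewrite S_INR. assert (Rabs (f n) <= B) by (apply H; lia).
   assert (Rabs (rsum n f) <= INR n * B) by (apply IHn; intros; apply H; lia).
   pose proof (Rabs_triang (rsum n f) (f n)). lra. Qed.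

Lemma dot_minus d f g al u : dot d (fun c => f c - al * g c) u = dot d f u - al * dot d g u.
Proof. unfold dot. rewrite <- rsum_scal.
 replace (rsum d (fun c => f c * u c) - rsum d (fun c => al * (g c * u c)))
  with (rsum d (fun c => f c * u c) + rsum d (fun c => -1 * (al * (g c * u c)))).
 2:{ rewrite rsum_scal. lra. }
 rewrite <- rsum_plus. apply rsum_ext. intros; lra. Qed.

Lemma dot_scal d al g u : dot d (fun c => al * g c) u = al * dot d g u.
Proof. unfold dot. rewrite <- rsum_scal. apply rsum_ext. intros; lra. Qed.

Lemma dot_lsum {A} d (L : list A) h p u :
  dot d (fun c => lsum L (fun s => h s * p s c)) u = lsum L (fun s => h s * dot d (p s) u).
Proof. induction L as [|x L IH]; simpl.
 - unfold dot. rewrite (rsum_ext _ _ (fun _ => 0)) by (intros; lra). rewrite rsum_const. lra.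
 - rewrite <- IH. unfold dot. rewrite <- rsum_scal, <- rsum_plus. apply rsum_ext. intros; simpl. lra. Qed.

Lemma lsum_le {A} (L : list A) f g : (forall s, In s L -> f s <= g s) -> lsum L f <= lsum L g.
Proof. induction L; simpl; intros H; [lra|]. assert (f a <= g a) by auto.
 assert (lsum L f <= lsum L g) by auto. unfold lsum in *. simpl. lra. Qed.

Lemma lsum_zero {A} (L : list A) : lsum L (fun _ => 0) = 0.
Proof. induction L; simpl; auto. unfold lsum in *; simpl. rewrite IHL. lra. Qed.

Lemma lsum_abs {A} (L : list A) f : (forall s, In s L -> Rabs (f s) <= 1) -> Rabs (lsum L f) <= INR (length L).
Proof. induction L; simpl; intros H. { unfold lsum; simpl. rewrite Rabs_R0. lra. }
 assert (Rabs (f a) <= 1) by auto. assert (Rabs (lsum L f) <= INR (length L)) by auto.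
 unfold lsum in *; simpl. pose proof (Rabs_triang (f a) (fold_right (fun s acc => f s + acc) 0 L)). destruct (length L); simpl in *; lra. Qed.

Lemma lsum_count_neg (L : list (input * R)) f y c : 0 <= c ->
  (forall s, In s L -> f s <= 0) -> (forall s, In s L -> snd s = y -> f s <= - c) ->
  lsum L f <= - c * INR (count_lab y L).
Proof. intros Hc. induction L as [|x L IH]; intros H1 H2.
 - unfold lsum, count_lab. simpl. lra.
 - assert (IH' : lsum L f <= - c * INR (count_lab y L)) by (apply IH; intros; [apply H1|apply H2]; simpl; auto).
   unfold count_lab in *. simpl. unfold lsum in *. simpl.
   destruct (Req_EM_T (snd x) y) as [e|e].
   + simpl length. rewrite S_INR. assert (f x <= - c) by (apply H2; simpl; auto). lra.
   + assert (f x <= 0) by (apply H1; simpl; auto). lra. Qed.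

Lemma rsum_ind1 k a : (a < k)%nat -> rsum k (fun i => if Nat.eq_dec i a then 1 else 0) = 1.
Proof. induction k; intros H; [lia|]. simpl rsum. destruct (Nat.eq_dec k a).
 - subst. rewrite (rsum_ext _ _ (fun _ => 0)). rewrite rsum_const. lra.
   intros c Hc. destruct (Nat.eq_dec c a); [lia|auto].
 - rewrite IHk by lia. lra. Qed.

Lemma rsum_ind k L : NoDup L -> (forall i, In i L -> (i < k)%nat) ->
  rsum k (fun i => if in_dec Nat.eq_dec i L then 1 else 0) = INR (length L).
Proof. induction L as [|a L IH]; intros Hn Hk.
 - rewrite (rsum_ext _ _ (fun _ => 0)). rewrite rsum_const. simpl; lra. intros; simpl. reflexivity.
 - apply NoDup_cons_iff in Hn as [Ha Hn].
   rewrite (rsum_ext _ _ (fun i => (if Nat.eq_dec i a then 1 else 0) + (if in_dec Nat.eq_dec i L then 1 else 0))).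
   + rewrite rsum_plus, rsum_ind1, IH.
     * simpl length. rewrite S_INR. lra.
     * exact Hn.
     * intros; apply Hk; simpl; auto.
     * apply Hk; simpl; auto.
   + intros c _. destruct (in_dec Nat.eq_dec c (a :: L)) as [h|h]; destruct (Nat.eq_dec c a);
     destruct (in_dec Nat.eq_dec c L); simpl in h; subst; try tauto; try lra.
     destruct h; [congruence|tauto]. Qed.

Lemma dot_pvec d w x j u : dot d (pvec d w x j) u =
  if Rlt_dec 0 (dot d w (x j)) then dot d (x j) u else 0.
Proof. unfold pvec. destruct (Rlt_dec 0 (dot d w (x j))). reflexivity.
 unfold dot. rewrite (rsum_ext _ _ (fun _ => 0)) by (intros; lra). rewrite rsum_const; lra. Qed.

Lemma cs_unit d w o : dot d o o = 1 -> (dot d w o) ^ 2 <= dot d w w.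
Proof. intros Ho. set (l := dot d w o).
 assert (H : 0 <= rsum d (fun c => (w c - l * o c) * (w c - l * o c))).
 { apply Rle_trans with (rsum d (fun _ => 0)); [rewrite rsum_const; lra|]. apply rsum_le. intros; apply Rle_0_sqr. }
 rewrite (rsum_ext _ _ (fun c => w c * w c + ((-2*l) * (w c * o c) + (l*l) * (o c * o c)))) in H by (intros; ring).
 rewrite !rsum_plus, !rsum_scal in H. unfold dot in *. fold l in H. nra. Qed.

Lemma neuron_nonneg d n w x : 0 <= neuron d n w x.
Proof. induction n; simpl; [lra|]. apply Rle_trans with (neuron d n w x); auto. apply Rmax_l. Qed.

Lemma neuron_ge d n w x j : (j < n)%nat -> relu (dot d w (x j)) <= neuron d n w x.
Proof. induction n; intros H; [lia|]. simpl. destruct (Nat.eq_dec j n).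
 - subst. apply Rmax_r.
 - apply Rle_trans with (neuron d n w x). apply IHn; lia. apply Rmax_l. Qed.

Lemma neuron_le d n w x B : 0 <= B -> (forall j, (j < n)%nat -> dot d w (x j) <= B) -> neuron d n w x <= B.
Proof. intros HB. induction n; intros H; simpl; [lra|]. apply Rmax_lub.
 apply IHn; intros; apply H; lia. unfold relu. apply Rmax_lub; auto. Qed.

Lemma relu_ge z : z <= relu z.
Proof. apply Rmax_r. Qed.

Lemma pattern_patch d n o lab x j : supp_pattern d n o lab x -> (j < n)%nat ->
  exists q, (x j = o q) /\ (q = lab \/ (2 <= q < d)%nat).
Proof. intros [jp [Hjp [ii H]]] Hj. destruct (H j Hj) as [H1 H2].
 destruct (Nat.eq_dec j jp). exists lab; auto. destruct (H2 n0) as [Hi Hx]. exists (ii j). auto. Qed.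

Lemma pattern_jp d n o lab x : supp_pattern d n o lab x -> exists jp, (jp < n)%nat /\ x jp = o lab.
Proof. intros [jp [Hjp [ii H]]]. exists jp. split; auto. apply (H jp Hjp). reflexivity. Qed.

Lemma dloss_bounds z : -1 < dloss z < 0.
Proof. unfold dloss. pose proof (exp_pos z). split.
 - assert (/ (1 + exp z) < 1). { rewrite <- Rinv_1. apply Rinv_lt_contravar; lra. } lra.
 - assert (0 < / (1 + exp z)) by (apply Rinv_0_lt_compat; lra). lra. Qed.

Lemma dloss_small z : z <= 1 -> dloss z <= - / 4.
Proof. intros H. unfold dloss. assert (exp z <= 3).
 { destruct (Req_dec z 1). subst; apply exp_le_3. pose proof (exp_increasing z 1). pose proof exp_le_3. lra. }
 pose proof (exp_pos z). assert (/ 4 <= / (1 + exp z)) by (apply Rinv_le_contravar; lra). lra. Qed.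

Theorem mainTheorem9
  (n d k T1 : nat) (o : nat -> vec) (S1 : list (input * R))
  (eta1 r : R) (a : nat -> R) (W : nat -> nat -> vec)
  (jsel : nat -> nat -> input -> nat) (v : nat -> R) :
  (1 <= n)%nat -> (3 <= d)%nat -> (1 <= k)%nat ->
  (forall p q, (p < d)%nat -> (q < d)%nat ->
     dot d (o p) (o q) = if Nat.eq_dec p q then 1 else 0) ->
  (forall s, In s S1 -> in_supp d n o s) -> NoDup S1 -> (1 <= length S1)%nat ->
  INR (length S1) / 3 <= INR (count_lab 1 S1) ->
  INR (length S1) / 3 <= INR (count_lab (-1) S1) ->
  0 < r ->
  (forall i, (i < k)%nat -> sqrt (dot d (W 0%nat i) (W 0%nat i)) = r) ->
  (forall i, (i < k)%nat -> a i = 1 \/ a i = -1) ->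
  (forall t i x, (jsel t i x < n)%nat /\
     forall j, (j < n)%nat -> dot d (W t i) (x j) <= dot d (W t i) (x (jsel t i x))) ->
  (forall t, (1 <= t <= T1)%nat -> forall i, (i < k)%nat -> forall c,
     W t i c = W (t - 1)%nat i c - eta1 *
       grad d n k S1 (W (t - 1)%nat) a
         (fun i' x => pvec d (W (t - 1)%nat i') x (jsel (t - 1)%nat i' x)) i c) ->
  (1 <= T1)%nat ->
  eta1 <= 1 / (4 * INR k * (INR T1 + 1)) ->
  r <= eta1 / 200 ->
  (exists c, card_is (fun i => (i < k)%nat /\ a i = 1 /\ W0plus d o (W 0%nat i)) c /\
     INR k / (4 * INR d) <= INR c <= INR k / INR d) ->
  (exists c, card_is (fun i => (i < k)%nat /\ a i = -1 /\ W0minus d o (W 0%nat i)) c /\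
     INR k / (4 * INR d) <= INR c <= INR k / INR d) ->
  (forall i, (i < k)%nat ->
     (a i = 1 /\ W0plus d o (W 0%nat i) -> v i = 80 * INR d / (INR k * eta1 * INR T1)) /\
     (a i = -1 /\ W0minus d o (W 0%nat i) -> v i = - (80 * INR d / (INR k * eta1 * INR T1))) /\
     (~ (a i = 1 /\ W0plus d o (W 0%nat i)) -> ~ (a i = -1 /\ W0minus d o (W 0%nat i)) ->
        v i = 0)) ->
  (forall xy, in_supp d n o xy ->
     snd xy * rsum k (fun i => v i * neuron d n (W T1 i) (fst xy)) > 1) /\
  rsum k (fun i => v i ^ 2) <= 2 * 80 ^ 2 * INR d / (INR k * eta1 ^ 2 * INR T1 ^ 2).
Proof.
intros Hn Hd Hk Horth Hsupp Hnd Hm Hcp Hcm Hr Hw0 Ha Hjsel Hgd HT1 Heta Hreta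
  [cP [[LP [HLPnd [HLPin HLPlen]]] HcP]] [cM [[LM [HLMnd [HLMin HLMlen]]] HcM]] Hv.
assert (Hep : 0 < eta1) by lra.
assert (HK : 1 <= INR k) by (apply (le_INR 1); lia).
assert (HT : 1 <= INR T1) by (apply (le_INR 1); lia).
assert (HD : 3 <= INR d) by (replace 3 with (INR 3) by (simpl; lra); apply le_INR; lia).
assert (HM : 1 <= INR (length S1)) by (apply (le_INR 1); lia).
assert (Hx : eta1 * (4*INR k*(INR T1+1)) <= 1).
{ replace 1 with (1/(4*INR k*(INR T1+1)) * (4*INR k*(INR T1+1))) at 2 by (field; lra).
  apply Rmult_le_compat_r; [nra|lra]. }
assert (Hkb : INR k * (r + eta1 * INR T1) <= 1/4) by nra.
assert (Hr0 : forall i q, (i < k)%nat -> (q < d)%nat -> Rabs (dot d (W 0%nat i) (o q)) <= r).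
{ intros i q Hi Hq. pose proof (cs_unit d (W 0%nat i) (o q)) as C.
  rewrite Horth in C by auto. destruct (Nat.eq_dec q q); [|congruence].
  specialize (C eq_refl). pose proof (Hw0 i Hi) as E.
  assert (E2 : dot d (W 0%nat i) (W 0%nat i) = r * r).
  { rewrite <- E. rewrite sqrt_sqrt; auto. apply Rle_trans with (2 := C). apply pow2_ge_0. }
  apply Rabs_le. nra. }
assert (Hpat : forall s, In s S1 -> forall j, (j < n)%nat -> exists q, (q < d)%nat /\ fst s j = o q).
{ intros s Hs j Hj. destruct (Hsupp s Hs) as [[_ P]|[_ P]];
  destruct (pattern_patch _ _ _ _ _ j P Hj) as [q [Eq Hq]]; exists q; split; auto; lia. }
assert (Hy : forall s, In s S1 -> snd s = 1 \/ snd s = -1).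
{ intros s Hs. destruct (Hsupp s Hs) as [[E _]|[E _]]; auto. }
assert (HdotP : forall t i s q, In s S1 -> (q < d)%nat ->
   0 <= dot d (pvec d (W t i) (fst s) (jsel t i (fst s))) (o q) <= 1).
{ intros t i s q Hs Hq. rewrite dot_pvec. destruct (Rlt_dec _ _); [|lra].
  destruct (Hjsel t i (fst s)) as [Hj _]. destruct (Hpat s Hs _ Hj) as [q' [Hq' E]].
  rewrite E, Horth by auto. destruct (Nat.eq_dec q' q); lra. }
assert (Hstep : forall t i u, (1 <= t <= T1)%nat -> (i < k)%nat ->
  dot d (W t i) u = dot d (W (t-1)%nat i) u - eta1 * (/ INR (length S1) *
    lsum S1 (fun s => (dloss (snd s * net d n k (W (t-1)%nat) a (fst s)) * snd s * a i) *
       dot d (pvec d (W (t-1)%nat i) (fst s) (jsel (t-1)%nat i (fst s))) u))).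
{ intros t i u Ht Hi.
  assert (E : W t i = fun c => W (t-1)%nat i c - eta1 * (/ INR (length S1) *
    lsum S1 (fun s => (dloss (snd s * net d n k (W (t-1)%nat) a (fst s)) * snd s * a i) *
       pvec d (W (t-1)%nat i) (fst s) (jsel (t-1)%nat i (fst s)) c))).
  { extensionality c. rewrite Hgd by auto. reflexivity. }
  rewrite E, dot_minus, dot_scal, dot_lsum. reflexivity. }
assert (Hbnd : forall t, (t <= T1)%nat -> forall i q, (i < k)%nat -> (q < d)%nat ->
   Rabs (dot d (W t i) (o q)) <= r + eta1 * INR t).
{ induction t as [|t IH]; intros Ht i q Hi Hq.
  - simpl INR. rewrite Rmult_0_r, Rplus_0_r. auto.
  - rewrite (Hstep (S t)) by (auto; lia). replace (S t - 1)%nat with t by lia.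
    set (L := lsum S1 _).
    assert (HL : Rabs L <= INR (length S1)).
    { apply lsum_abs. intros s Hs. rewrite !Rabs_mult.
      assert (E1 : Rabs (snd s) = 1) by (destruct (Hy s Hs) as [->| ->]; rewrite ?Rabs_Ropp, ?Rabs_R1; try lra; rewrite Rabs_left; lra).
      assert (E2 : Rabs (a i) = 1) by (destruct (Ha i Hi) as [->| ->]; rewrite ?Rabs_R1; try lra; rewrite Rabs_left; lra).
      rewrite E1, E2. pose proof (dloss_bounds (snd s * net d n k (W t) a (fst s))) as B.
      assert (Rabs (dloss (snd s * net d n k (W t) a (fst s))) <= 1) by (apply Rabs_le; lra).
      pose proof (HdotP t i s q Hs Hq) as B2.
      rewrite (Rabs_right (dot _ _ _)) by lra.
      pose proof (Rabs_pos (dloss (snd s * net d n k (W t) a (fst s)))). nra. }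
    assert (HX : Rabs (/ INR (length S1) * L) <= 1).
    { rewrite Rabs_mult, Rabs_right by (left; apply Rinv_0_lt_compat; lra).
      apply Rle_trans with (/ INR (length S1) * INR (length S1)).
      apply Rmult_le_compat_l; [left; apply Rinv_0_lt_compat; lra | auto].
      rewrite Rinv_l; lra. }
    pose proof (IH ltac:(lia) i q Hi Hq).
    pose proof (Rabs_triang (dot d (W t i) (o q)) (- (eta1 * (/ INR (length S1) * L)))).
    rewrite Rabs_Ropp, Rabs_mult, (Rabs_right eta1) in H0 by lra.
    rewrite S_INR. unfold Rminus. nra. }
assert (Hnet : forall t, (t <= T1)%nat -> forall s, In s S1 ->
   Rabs (net d n k (W t) a (fst s)) <= 1/4).
{ intros t Ht s Hs. unfold net. apply Rle_trans with (2 := Hkb). apply rsum_abs.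
  intros i Hi. rewrite Rabs_mult.
  assert (E2 : Rabs (a i) = 1) by (destruct (Ha i Hi) as [->| ->]; rewrite ?Rabs_R1; try lra; rewrite Rabs_left; lra).
  rewrite E2, Rmult_1_l, Rabs_right by (apply Rle_ge, neuron_nonneg).
  assert (INR t <= INR T1) by (apply le_INR; lia).
  apply neuron_le; [nra|]. intros j Hj. destruct (Hpat s Hs j Hj) as [q [Hq ->]].
  pose proof (Hbnd t Ht i q Hi Hq). pose proof (Rle_abs (dot d (W t i) (o q))). nra. }
assert (Hsig : forall t, (t < T1)%nat -> forall s, In s S1 ->
   dloss (snd s * net d n k (W t) a (fst s)) <= - / 4).
{ intros t Ht s Hs. apply dloss_small.
  pose proof (Hnet t ltac:(lia) s Hs). pose proof (Rle_abs (snd s * net d n k (W t) a (fst s))).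
  rewrite Rabs_mult in H0. destruct (Hy s Hs) as [E|E]; rewrite E in H0 |- *;
  rewrite ?Rabs_R1 in H0; try rewrite (Rabs_left (-1)) in H0; nra. }
assert (Hdyn : forall lab other ya yo,
   ((lab = 0%nat /\ other = 1%nat /\ ya = 1 /\ yo = -1) \/ (lab = 1%nat /\ other = 0%nat /\ ya = -1 /\ yo = 1)) ->
   forall i, (i < k)%nat -> a i = ya ->
   (forall l, (2 <= l < d)%nat -> dot d (W 0%nat i) (o l) < dot d (W 0%nat i) (o lab)) ->
   0 < dot d (W 0%nat i) (o lab) ->
   forall t, (t <= T1)%nat ->
   (forall q, (q < d)%nat -> q <> lab -> dot d (W t i) (o q) <= dot d (W 0%nat i) (o q)) /\
   dot d (W 0%nat i) (o lab) + eta1 * INR t / 12 <= dot d (W t i) (o lab)).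
{ intros lab other ya yo Hlo i Hi Hai H0l H0p.
  assert (Hlab : (lab < 2)%nat /\ (other < 2)%nat /\ lab <> other /\ ya * ya = 1 /\ yo * ya = -1 /\
    (forall s, In s S1 -> (snd s = ya /\ supp_pattern d n o lab (fst s)) \/
                          (snd s = yo /\ supp_pattern d n o other (fst s))) /\
    INR (length S1) / 3 <= INR (count_lab ya S1)).
  { destruct Hlo as [[-> [-> [-> ->]]]|[-> [-> [-> ->]]]]; repeat split; try lia; try lra; auto;
    intros s Hs; destruct (Hsupp s Hs) as [[E P]|[E P]]; auto. }
  destruct Hlab as [Hl2 [Ho2 [Hlo' [Hyy [Hyo [Hcls Hcnt]]]]]].
  induction t as [|t IH]; intros Ht.
  - split. intros; lra. simpl INR. lra.
  - destruct IH as [IH1 IH2]; [lia|].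
    assert (Ht0 : 0 <= INR t) by apply pos_INR.
    assert (Hw : forall l, (2 <= l < d)%nat -> dot d (W t i) (o l) < dot d (W t i) (o lab)).
    { intros l Hl. pose proof (IH1 l ltac:(lia) ltac:(lia)). pose proof (H0l l Hl). nra. }
    assert (Hp : 0 < dot d (W t i) (o lab)) by nra.
    assert (Hsame : forall s, In s S1 -> snd s = ya -> forall q, (q < d)%nat ->
       dot d (pvec d (W t i) (fst s) (jsel t i (fst s))) (o q) = if Nat.eq_dec lab q then 1 else 0).
    { intros s Hs Es q Hq. destruct (Hcls s Hs) as [[_ P]|[E _]]; [|nra].
      destruct (pattern_jp _ _ _ _ _ P) as [jp [Hjp Ejp]].
      destruct (Hjsel t i (fst s)) as [Hj Hmax]. specialize (Hmax jp Hjp).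
      destruct (pattern_patch _ _ _ _ _ _ P Hj) as [q' [Eq' [->|Hq']]].
      - rewrite dot_pvec, Eq'. destruct (Rlt_dec _ _); [|lra]. apply Horth; lia.
      - rewrite Eq', Ejp in Hmax. pose proof (Hw q' Hq'). lra. }
    assert (Hoth : forall s, In s S1 -> snd s = yo -> forall q, (q < d)%nat ->
       0 <= dot d (pvec d (W t i) (fst s) (jsel t i (fst s))) (o q) /\
       (q = lab -> dot d (pvec d (W t i) (fst s) (jsel t i (fst s))) (o q) = 0)).
    { intros s Hs Es q Hq. destruct (Hcls s Hs) as [[E _]|[_ P]]; [nra|].
      destruct (Hjsel t i (fst s)) as [Hj _].
      rewrite dot_pvec. destruct (Rlt_dec _ _); [|lra].
      destruct (pattern_patch _ _ _ _ _ _ P Hj) as [q' [Eq' Hq']].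
      rewrite Eq', Horth by lia. destruct (Nat.eq_dec q' q); [|lra].
      split; [lra|]. intros. lia. }
    rewrite S_INR. split.
    + intros q Hq Hql. rewrite (Hstep (S t)) by (auto; lia). replace (S t - 1)%nat with t by lia.
      set (L := lsum S1 _).
      assert (HL : 0 <= L).
      { rewrite <- (lsum_zero S1). apply lsum_le. intros s Hs. cbv beta.
        rewrite Hai. pose proof (dloss_bounds (snd s * net d n k (W t) a (fst s))).
        destruct (Hcls s Hs) as [[E _]|[E _]].
        - rewrite (Hsame s Hs E q Hq). destruct (Nat.eq_dec lab q); [lia|]. lra.
        - destruct (Hoth s Hs E q Hq) as [H1 _].
          set (D := dloss (snd s * net d n k (W t) a (fst s))) in *. rewrite E.
          replace (D * yo * ya) with (- D) by (replace (D * yo * ya) with (D * (yo * ya)) by ring; rewrite Hyo; ring). nra. }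
      assert (0 <= / INR (length S1)) by (left; apply Rinv_0_lt_compat; lra).
      pose proof (IH1 q Hq Hql).
      assert (0 <= eta1 * (/ INR (length S1) * L)) by (apply Rmult_le_pos; [lra| apply Rmult_le_pos; lra]).
      lra.
    + rewrite (Hstep (S t)) by (auto; lia). replace (S t - 1)%nat with t by lia.
      set (L := lsum S1 _).
      assert (HL : L <= - / 4 * INR (count_lab ya S1)).
      { apply lsum_count_neg; [lra| |].
        - intros s Hs. cbv beta.
          rewrite Hai. pose proof (dloss_bounds (snd s * net d n k (W t) a (fst s))).
          destruct (Hcls s Hs) as [[E _]|[E _]].
          + rewrite (Hsame s Hs E lab ltac:(lia)).
            set (D := dloss (snd s * net d n k (W t) a (fst s))) in *. rewrite E. replace (D * ya * ya) with (D * (ya * ya)) by ring. rewrite Hyy. destruct (Nat.eq_dec lab lab); lra.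
          + destruct (Hoth s Hs E lab ltac:(lia)) as [_ H2]. rewrite H2 by auto. lra.
        - intros s Hs E. cbv beta. rewrite Hai.
          rewrite (Hsame s Hs E lab ltac:(lia)). destruct (Nat.eq_dec lab lab); [|lia].
          pose proof (Hsig t ltac:(lia) s Hs).
          set (D := dloss (snd s * net d n k (W t) a (fst s))) in *. rewrite E. replace (D * ya * ya) with (D * (ya * ya)) by ring. rewrite Hyy. lra. }
      assert (HX : / INR (length S1) * L <= - / 12).
      { apply Rle_trans with (/ INR (length S1) * (- / 4 * (INR (length S1) / 3))).
        - apply Rmult_le_compat_l; [left; apply Rinv_0_lt_compat; lra|]. lra.
        - right. field. lra. }
      nra. }
assert (Hfin : forall lab other ya yo,
   ((lab = 0%nat /\ other = 1%nat /\ ya = 1 /\ yo = -1) \/ (lab = 1%nat /\ other = 0%nat /\ ya = -1 /\ yo = 1)) ->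
   forall i, (i < k)%nat -> a i = ya ->
   (forall l, (2 <= l < d)%nat -> dot d (W 0%nat i) (o l) < dot d (W 0%nat i) (o lab)) ->
   0 < dot d (W 0%nat i) (o lab) ->
   (forall x, supp_pattern d n o lab x -> eta1 * INR T1 / 12 <= neuron d n (W T1 i) x) /\
   (forall x, supp_pattern d n o other x -> neuron d n (W T1 i) x <= r)).
{ intros lab other ya yo Hlo i Hi Hai H0l H0p.
  destruct (Hdyn lab other ya yo Hlo i Hi Hai H0l H0p T1 (le_n _)) as [D1 D2].
  assert (Hl2 : (lab < 2)%nat /\ (other < 2)%nat /\ lab <> other) by
    (destruct Hlo as [[-> [-> _]]|[-> [-> _]]]; lia).
  split.
  - intros x P. destruct (pattern_jp _ _ _ _ _ P) as [jp [Hjp Ejp]].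
    pose proof (neuron_ge d n (W T1 i) x jp Hjp). rewrite Ejp in H.
    pose proof (relu_ge (dot d (W T1 i) (o lab))). lra.
  - intros x P. apply neuron_le; [lra|]. intros j Hj.
    destruct (pattern_patch _ _ _ _ _ _ P Hj) as [q [-> Hq]].
    assert (Hqd : (q < d)%nat) by lia.
    pose proof (D1 q Hqd ltac:(lia)). pose proof (Hr0 i q Hi Hqd).
    pose proof (Rle_abs (dot d (W 0%nat i) (o q))). lra. }
set (V := 80 * INR d / (INR k * eta1 * INR T1)).
assert (HV : 0 < V) by (unfold V; apply Rdiv_lt_0_compat; [lra|]; apply Rmult_lt_0_compat; [nra|lra]).
assert (HPk : forall i, In i LP -> (i < k)%nat) by (intros i h; apply HLPin in h; tauto).
assert (HMk : forall i, In i LM -> (i < k)%nat) by (intros i h; apply HLMin in h; tauto).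
assert (Hcase : forall i, (i < k)%nat ->
   (In i LP /\ ~ In i LM /\ v i = V /\ (forall x, supp_pattern d n o 0 x -> eta1 * INR T1 / 12 <= neuron d n (W T1 i) x)
        /\ (forall x, supp_pattern d n o 1 x -> neuron d n (W T1 i) x <= r)) \/
   (~ In i LP /\ In i LM /\ v i = - V /\ (forall x, supp_pattern d n o 1 x -> eta1 * INR T1 / 12 <= neuron d n (W T1 i) x)
        /\ (forall x, supp_pattern d n o 0 x -> neuron d n (W T1 i) x <= r)) \/
   (~ In i LP /\ ~ In i LM /\ v i = 0)).
{ intros i Hi. destruct (Hv i Hi) as [V1 [V2 V3]].
  destruct (in_dec Nat.eq_dec i LP) as [hP|hP]; destruct (in_dec Nat.eq_dec i LM) as [hM|hM].
  - exfalso. apply HLPin in hP. apply HLMin in hM. lra.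
  - left. apply HLPin in hP as hP'. destruct hP' as [_ [A1 [B1 B2]]].
    destruct (Hfin 0%nat 1%nat 1 (-1) ltac:(left; repeat split) i Hi A1 B1 B2).
    repeat split; auto. apply V1. split; auto. split; auto.
  - right; left. apply HLMin in hM as hM'. destruct hM' as [_ [A1 [B1 B2]]].
    destruct (Hfin 1%nat 0%nat (-1) 1 ltac:(right; repeat split) i Hi A1 B1 B2).
    repeat split; auto. apply V2. split; auto. split; auto.
  - right; right. repeat split; auto. apply V3.
    + intro h. apply hP, HLPin. tauto.
    + intro h. apply hM, HLMin. tauto. }
assert (HiP : rsum k (fun i => if in_dec Nat.eq_dec i LP then 1 else 0) = INR cP)
  by (rewrite rsum_ind; auto; rewrite HLPlen; auto).
assert (HiM : rsum k (fun i => if in_dec Nat.eq_dec i LM then 1 else 0) = INR cM)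
  by (rewrite rsum_ind; auto; rewrite HLMlen; auto).
assert (Hlin : forall al be, rsum k (fun i => al * (if in_dec Nat.eq_dec i LP then 1 else 0) +
                                              be * (if in_dec Nat.eq_dec i LM then 1 else 0)) = al * INR cP + be * INR cM).
{ intros al be. rewrite rsum_plus, !rsum_scal, HiP, HiM. reflexivity. }
set (G := eta1 * INR T1 / 12).
assert (HG : 0 < G) by (unfold G; nra).
assert (HVG : V * G = 80 * INR d / (12 * INR k)) by (unfold V, G; field; lra).
assert (HVr : V * r <= 80 * INR d / (200 * INR k * INR T1)).
{ apply Rle_trans with (V * (eta1 / 200)). apply Rmult_le_compat_l; lra.
  right. unfold V. field. lra. }
assert (HcPd : INR k <= 4 * INR d * INR cP).
{ destruct HcP as [H1 _]. apply Rmult_le_compat_l with (r := 4 * INR d) in H1; [|lra].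
  replace (4 * INR d * (INR k / (4 * INR d))) with (INR k) in H1 by (field; lra). lra. }
assert (HcMd : INR d * INR cM <= INR k).
{ destruct HcM as [_ H1]. apply Rmult_le_compat_l with (r := INR d) in H1; [|lra].
  replace (INR d * (INR k / INR d)) with (INR k) in H1 by (field; lra). lra. }
assert (HcMd' : INR d * INR cP <= INR k).
{ destruct HcP as [_ H1]. apply Rmult_le_compat_l with (r := INR d) in H1; [|lra].
  replace (INR d * (INR k / INR d)) with (INR k) in H1 by (field; lra). lra. }
assert (HcPd' : INR k <= 4 * INR d * INR cM).
{ destruct HcM as [H1 _]. apply Rmult_le_compat_l with (r := INR d) in H1; [|lra].
  apply Rmult_le_compat_l with (r := 4) in H1; [|lra].
  replace (4 * (INR d * (INR k / (4 * INR d)))) with (INR k) in H1 by (field; lra). lra. }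
assert (Hmarg : forall c1 c2, INR k <= 4 * INR d * c1 -> INR d * c2 <= INR k -> 0 <= c2 ->
   1 < V * G * c1 - V * r * c2).
{ intros c1 c2 H1 H2 H3. rewrite HVG.
  assert (E1 : 80 * INR d / (12 * INR k) * c1 = 80 / 12 * (INR d * c1 / INR k)) by (field; lra).
  assert (A1 : 1/4 <= INR d * c1 / INR k).
  { apply Rmult_le_reg_r with (INR k); [lra|]. replace (INR d * c1 / INR k * INR k) with (INR d * c1) by (field; lra). lra. }
  assert (A2 : V * r * c2 <= 80 * INR d / (200 * INR k * INR T1) * c2) by (apply Rmult_le_compat_r; lra).
  assert (E2 : 80 * INR d / (200 * INR k * INR T1) * c2 = 80 / (200 * INR T1) * (INR d * c2 / INR k)) by (field; lra).
  assert (A3 : INR d * c2 / INR k <= 1).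
  { apply Rmult_le_reg_r with (INR k); [lra|]. replace (INR d * c2 / INR k * INR k) with (INR d * c2) by (field; lra). lra. }
  assert (A4 : 0 <= INR d * c2 / INR k) by (unfold Rdiv; apply Rmult_le_pos; [nra| left; apply Rinv_0_lt_compat; lra]).
  assert (A5 : 80 / (200 * INR T1) <= 80 / 200).
  { unfold Rdiv. apply Rmult_le_compat_l; [lra|]. apply Rinv_le_contravar; lra. }
  assert (A6 : 0 <= 80 / (200 * INR T1)) by (unfold Rdiv; apply Rmult_le_pos; [lra| left; apply Rinv_0_lt_compat; lra]).
  nra. }
split.
- intros xy Hxy. destruct Hxy as [[Ey P]|[Ey P]]; rewrite Ey.
  + assert (Hs : V * G * INR cP - V * r * INR cM <= rsum k (fun i => v i * neuron d n (W T1 i) (fst xy))).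
    { replace (V * G * INR cP - V * r * INR cM) with (V * G * INR cP + (- (V * r)) * INR cM) by ring.
      rewrite <- Hlin. apply rsum_le. intros i Hi.
      pose proof (neuron_nonneg d n (W T1 i) (fst xy)).
      destruct (Hcase i Hi) as [[h1 [h2 [h3 [h4 h5]]]]|[[h1 [h2 [h3 [h4 h5]]]]|[h1 [h2 h3]]]];
        destruct (in_dec Nat.eq_dec i LP); try tauto; destruct (in_dec Nat.eq_dec i LM); try tauto; rewrite h3.
      - specialize (h4 _ P). fold G in h4. nra.
      - specialize (h5 _ P). nra.
      - lra. }
    pose proof (Hmarg (INR cP) (INR cM) HcPd HcMd (pos_INR _)). lra.
  + assert (Hs : rsum k (fun i => v i * neuron d n (W T1 i) (fst xy)) <= V * r * INR cP - V * G * INR cM).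
    { replace (V * r * INR cP - V * G * INR cM) with (V * r * INR cP + (- (V * G)) * INR cM) by ring.
      rewrite <- Hlin. apply rsum_le. intros i Hi.
      pose proof (neuron_nonneg d n (W T1 i) (fst xy)).
      destruct (Hcase i Hi) as [[h1 [h2 [h3 [h4 h5]]]]|[[h1 [h2 [h3 [h4 h5]]]]|[h1 [h2 h3]]]];
        destruct (in_dec Nat.eq_dec i LP); try tauto; destruct (in_dec Nat.eq_dec i LM); try tauto; rewrite h3.
      - specialize (h5 _ P). nra.
      - specialize (h4 _ P). fold G in h4. nra.
      - lra. }
    pose proof (Hmarg (INR cM) (INR cP) HcPd' HcMd' (pos_INR _)). lra.
- apply Rle_trans with (V ^ 2 * INR cP + V ^ 2 * INR cM).
  + rewrite <- Hlin. apply rsum_le. intros i Hi.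
    destruct (Hcase i Hi) as [[h1 [h2 [h3 _]]]|[[h1 [h2 [h3 _]]]|[h1 [h2 h3]]]];
      destruct (in_dec Nat.eq_dec i LP); try tauto; destruct (in_dec Nat.eq_dec i LM); try tauto; rewrite h3; nra.
  + assert (E : V ^ 2 = 80 ^ 2 * INR d ^ 2 / (INR k ^ 2 * eta1 ^ 2 * INR T1 ^ 2)) by (unfold V; field; lra).
    assert (HS : INR d * (INR cP + INR cM) <= 2 * INR k) by lra.
    replace (V ^ 2 * INR cP + V ^ 2 * INR cM) with (V ^ 2 * (INR cP + INR cM)) by ring.
    rewrite E.
    replace (2 * 80 ^ 2 * INR d / (INR k * eta1 ^ 2 * INR T1 ^ 2)) with
      (80 ^ 2 * INR d / (INR k ^ 2 * eta1 ^ 2 * INR T1 ^ 2) * (2 * INR k)) by (field; lra).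
    replace (80 ^ 2 * INR d ^ 2 / (INR k ^ 2 * eta1 ^ 2 * INR T1 ^ 2) * (INR cP + INR cM)) with
      (80 ^ 2 * INR d / (INR k ^ 2 * eta1 ^ 2 * INR T1 ^ 2) * (INR d * (INR cP + INR cM))) by (field; lra).
    apply Rmult_le_compat_l; [|lra].
    unfold Rdiv. apply Rmult_le_pos; [nra|]. left. apply Rinv_0_lt_compat.
    apply Rmult_lt_0_compat; [apply Rmult_lt_0_compat; apply pow_lt; lra | apply pow_lt; lra].
Qed.
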